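(* Let $F$ be a nonempty $\Omega$-decorated rooted forest. Let $A$ be the set of triples $(\sigma,\tau,\rho)$ where, for some $s\ge r\ge1$, $\sigma:\mathcal V(F)\to\{1,\ldots,s\}$ is a surjection with $u<v\Rightarrow\sigma(u)<\sigma(v)$, $\tau:\{1,\ldots,s\}\to\{1,\ldots,r\}$ is a nondecreasing surjection, and $\rho\in\mathrm{qsh}(\tau)$. Let $B$ be the set of triples $(G,\alpha,\beta)$ where $G$ is a covering subforest of $F$, and for some $r,t\ge1$, $\alpha:\mathcal V(F/G)\to\{1,\ldots,r\}$ is a surjection strictly increasing for the order of $F/G$ (i.e. $x<y\Rightarrow\alpha(x)<\alpha(y)$) and $\beta:\mathcal V(G)\to\{1,\ldots,t\}$ is a surjection strictly increasing for the order of $G$. Then there is a bijection $\Phi:A\to B$ such that, whenever $\Phi(\sigma,\tau,\rho)=(G,\alpha,\beta)$, one has $F^{\tau\circ\sigma}=(F/G)^\alpha$ and $F^{\rho\circ\sigma}=G^\beta$.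
   Context: $\Omega$ is a set with a commutative semigroup law written additively, $[a+b]$ the sum. A rooted forest is a finite directed acyclic graph in which each vertex has at most one incoming edge; its vertex set $\mathcal V(F)$ is partially ordered by $u\le v$ iff there is a directed path from a root to $v$ through $u$. An $\Omega$-decorated forest carries a map $d:\mathcal V(F)\to\Omega$. A covering subforest $G$ of $F$ is a partition of $\mathcal V(F)$ into blocks each inducing a connected subgraph, identified with the decorated forest on $\mathcal V(G)=\mathcal V(F)$ obtained by keeping only edges of $F$ inside blocks; $F/G$ is obtained from $F$ by contracting each block to one vertex decorated by the $\Omega$-sum of the decorations of the block. For a decorated forest $H$ and a surjection $\sigma:\mathcal V(H)\to\{1,\ldots,s\}$, $H^\sigma$ is the word $H^\sigma_1\cdots H^\sigma_s$ with $H^\sigma_j=[\sum_{\sigma(v)=j}d(v)]\in\Omega$. For a nondecreasing surjection $\tau:\{1,\ldots,s\}\to\{1,\ldots,r\}$, $\mathrm{qsh}(\tau)$ is the set of surjections $\rho:\{1,\ldots,s\}\to\{1,\ldots,t\}$ (for some $t\le s$) that are strictly increasing on each block $\tau^{-1}(j)$, $j=1,\ldots,r$. *)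

(* Defs.v *)
From mathcomp Require Import all_boot.
Set Implicit Arguments. Unset Strict Implicit. Unset Printing Implicit Defensive.

(* ---------- Omega-valued sums (semigroup, no unit: None plays the unit) ---- *)
Definition oop (Om : Type) (op : Om -> Om -> Om) (a b : option Om) : option Om :=
  match a, b with
  | None, _ => b
  | _, None => a
  | Some x, Some y => Some (op x y)
  end.
Definition osum (Om : Type) (op : Om -> Om -> Om) (l : seq (option Om)) :=
  foldr (oop op) None l.

Definition strict_below (T : finType) (e : rel T) (x y : T) : bool :=
  [exists z, e x z && connect e z y].

Definition fedge (V : finType) (par : V -> option V) : rel V :=
  fun x y => par y == Some x.

Definition is_forest (V : finType) (par : V -> option V) : Prop :=
  forall v, ~~ strict_below (fedge par) v v.

Definition block_rel (V : finType) (par : V -> option V) (b : {set V}) : rel V :=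
  fun x y => [&& x \in b, y \in b & (par y == Some x) || (par x == Some y)].

Definition covering_subforest (V : finType) (par : V -> option V)
    (P : {set {set V}}) : Prop :=
  partition P [set: V] /\
  forall b, b \in P -> forall x y, x \in b -> y \in b -> connect (block_rel par b) x y.

(* G as a forest on V(G) = V(F): keep only edges of F inside blocks *)
Definition Gedge (V : finType) (par : V -> option V) (P : {set {set V}}) : rel V :=
  fun x y => (par y == Some x) && (pblock P x == pblock P y).

(* F/G: vertices are the blocks of P; an edge b -> c for each edge of F
   going from block b to a different block c *)
Definition Qedge (V : finType) (par : V -> option V) (P : {set {set V}}) :
    rel {set V} :=
  fun b c => [&& b \in P, c \in P, b != c &
              [exists x in c, exists y in b, par x == Some y]].

Definition block_dec (Om : Type) (op : Om -> Om -> Om) (V : finType)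
    (d : V -> Om) (b : {set V}) : option Om :=
  osum op [seq Some (d v) | v <- enum b].

Definition surj_onto (T : Type) (D : T -> Prop) (f : T -> nat) (n : nat) : Prop :=
  (forall x, D x -> 1 <= f x <= n) /\
  (forall j, 1 <= j <= n -> exists x, D x /\ f x = j).

(* H^f : the word H^f_1 ... H^f_s, s = max f, H^f_j = sum_{f v = j} d v *)
Definition word (Om : Type) (op : Om -> Om -> Om) (T : finType) (D : pred T)
    (d : T -> option Om) (f : T -> nat) : seq (option Om) :=
  [seq osum op [seq d x | x <- enum T & D x && (f x == j)]
  | j <- iota 1 (\max_(x | D x) f x)].

(* A function on {1,...,s} is encoded by the list of its values
   [:: g 1; ...; g s]; [lfun g j] is the value at j. *)
Definition lfun (g : seq nat) (j : nat) : nat := nth 0 g j.-1.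
Definition in1s (s : nat) (j : nat) : Prop := 1 <= j <= s.

Definition inA (V : finType) (par : V -> option V)
    (x : {ffun V -> nat} * seq nat * seq nat) : Prop :=
  let: (sigma, tau, rho) := x in
  exists s r, [/\ 1 <= r <= s,
    surj_onto (fun _ => True) sigma s,
    (forall u v, strict_below (fedge par) u v -> sigma u < sigma v),
    [/\ size tau = s, surj_onto (in1s s) (lfun tau) r &
        forall i j, 1 <= i -> i <= j -> j <= s -> lfun tau i <= lfun tau j] &
    [/\ size rho = s,
        (exists t, t <= s /\ surj_onto (in1s s) (lfun rho) t) &
        forall i j, 1 <= i -> i < j -> j <= s -> lfun tau i = lfun tau j ->
          lfun rho i < lfun rho j]].

Definition inB (V : finType) (par : V -> option V)
    (y : {set {set V}} * {ffun {set V} -> nat} * {ffun V -> nat}) : Prop :=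
  let: (P, alpha, beta) := y in
  [/\ covering_subforest par P,
    (* alpha is a function on V(F/G) = P; normalised to 0 outside P *)
    (forall b, b \notin P -> alpha b = 0),
    (exists r, 1 <= r /\ surj_onto (fun b => b \in P) alpha r) /\
    (forall b c, strict_below (Qedge par P) b c -> alpha b < alpha c),
    (exists t, 1 <= t /\ surj_onto (fun _ => True) beta t) &
    (forall u v, strict_below (Gedge par P) u v -> beta u < beta v)].

(* Main.v *)
From HB Require Import structures.
Require Import Defs.
From mathcomp Require Import all_boot zify.
Set Implicit Arguments. Unset Strict Implicit. Unset Printing Implicit Defensive.

Section Rank.
Variables (V : finType) (f : V -> nat).
Definition rkS := sort leq (undup (map f (enum V))).
Definition rk v := (index (f v) rkS).+1.

Lemma rkS_ltn : sorted ltn rkS.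
Proof.
by rewrite ltn_sorted_uniq_leq sort_uniq undup_uniq (sort_sorted leq_total).
Qed.

Lemma mem_rkS v : f v \in rkS.
Proof. by rewrite mem_sort mem_undup map_f // mem_enum. Qed.

Lemma rk_range v : 1 <= rk v <= size rkS.
Proof. by rewrite /rk ltnS index_mem mem_rkS. Qed.

Lemma nth_rk v : nth 0 rkS (rk v).-1 = f v.
Proof. by rewrite /rk /= nth_index // mem_rkS. Qed.

Lemma rk_surj j : 1 <= j <= size rkS -> exists v, rk v = j.
Proof.
case: j => // j /= Hj.
have : nth 0 rkS j \in rkS by rewrite mem_nth.
rewrite mem_sort mem_undup => /mapP [v _ Hv].
exists v; rewrite /rk -Hv index_uniq //.
by rewrite sort_uniq undup_uniq.
Qed.

Lemma rk_nth_lt i j : i < j < size rkS -> nth 0 rkS i < nth 0 rkS j.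
Proof.
case/andP => ij js.
apply: (sorted_ltn_nth ltn_trans 0 rkS_ltn) => //; rewrite inE //.
exact: ltn_trans js.
Qed.

Lemma rk_lt u v : (rk u < rk v) = (f u < f v).
Proof.
have Hu := rk_range u; have Hv := rk_range v.
have Eu := nth_rk u; have Ev := nth_rk v.
case: (ltngtP (rk u) (rk v)) => H.
- rewrite -Eu -Ev; symmetry; apply: rk_nth_lt; lia.
- symmetry; apply/negbTE; rewrite -leqNgt -Eu -Ev ltnW //; apply: rk_nth_lt; lia.
- by rewrite -Eu -Ev H ltnn.
Qed.

Lemma rk_size_pos : 0 < #|V| -> 0 < size rkS.
Proof.
move=> H; case/card_gt0P: H => v _.
have := rk_range v; lia.
Qed.
End Rank.

Lemma path_mono (T : finType) (e : rel T) (g : T -> nat) :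
  (forall x y, e x y -> g x < g y) ->
  forall x y, connect e x y -> g x <= g y.
Proof.
move=> He x y /connectP [p Hp ->] {y}.
elim: p x Hp => //= z p IH x /andP [exz Hp].
exact: leq_trans (ltnW (He _ _ exz)) (IH _ Hp).
Qed.

Lemma strict_mono (T : finType) (e : rel T) (g : T -> nat) :
  (forall x y, e x y -> g x < g y) ->
  forall x y, strict_below e x y -> g x < g y.
Proof.
move=> He x y /existsP [z /andP [exz czy]].
exact: leq_trans (He _ _ exz) (path_mono He czy).
Qed.

Lemma edge_strict (T : finType) (e : rel T) x y : e x y -> strict_below e x y.
Proof. by move=> h; apply/existsP; exists y; rewrite h connect0. Qed.

Lemma surj_le s r (g : nat -> nat) : surj_onto (in1s s) g r -> r <= s.
Proof.
case=> _ Hs.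
have -> : r = size (iota 1 r) by rewrite size_iota.
have -> : s = size (map g (iota 1 s)) by rewrite size_map size_iota.
apply: uniq_leq_size; first exact: iota_uniq.
move=> j; rewrite mem_iota => Hj.
have [x [Hx <-]] := Hs j ltac:(lia).
apply: map_f; rewrite mem_iota; rewrite /in1s in Hx; lia.
Qed.
Section Mon.
Variables (Om : Type) (op : Om -> Om -> Om)
    (op_assoc : associative op) (op_comm : commutative op).
Lemma oopA : associative (oop op).
Proof. by case=> [x|] [y|] [z|] //=; rewrite op_assoc. Qed.
Lemma oopC : commutative (oop op).
Proof. by case=> [x|] [y|] //=; rewrite op_comm. Qed.
Lemma oop0 : left_id None (oop op).
Proof. by case. Qed.
HB.instance Definition _ := Monoid.isComLaw.Build (option Om) None (oop op) oopA oopC oop0.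

Lemma osum_big (I : Type) (l : seq I) (F : I -> option Om) :
  osum op [seq F x | x <- l] = \big[oop op/None]_(x <- l) F x.
Proof. by elim: l => [|x l IH]; rewrite ?big_nil ?big_cons //= -IH. Qed.

Lemma connect_restrict (T:finType) (e e': rel T) (A : pred T) x y : x \in A ->
  (forall u w, u \in A -> e u w -> (w \in A) && e' u w) -> connect e x y -> connect e' x y.
Proof.
move=> xA H /connectP [p Hp ->] {y}.
elim: p x xA Hp => //= z p IH x xA /andP [exz Hp].
case/andP: (H _ _ xA exz) => zA e'xz.
exact: connect_trans (connect1 e'xz) (IH _ zA Hp).
Qed.

Lemma connect_const (T:finType) (e : rel T) (c : T -> nat) :
  (forall x y, e x y -> c x = c y) -> forall x y, connect e x y -> c x = c y.
Proof.
move=> He x y /connectP [p Hp ->] {y}.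
elim: p x Hp => //= z p IH x /andP [exz Hp].
by rewrite (He _ _ exz) (IH _ Hp).
Qed.

Section Main.
Variables (V : finType) (par : V -> option V).

Definition erel (c : V -> nat) : rel V :=
  fun x y => ((par y == Some x) || (par x == Some y)) && (c x == c y).
Definition PP c := equivalence_partition (connect (erel c)) [set: V].
Definition alph c : {ffun {set V} -> nat} :=
  [ffun b => if b \in PP c then (if [pick x in b] is Some x then c x else 0) else 0].

Lemma erel_sym c : symmetric (erel c).
Proof. by move=> x y; rewrite /erel /= orbC [c y == _]eq_sym. Qed.

Lemma erel_eqv c : {in [set: V] & &, equivalence_rel (connect (erel c))}.
Proof.
move=> x y z *; split; first exact: connect0.
move=> cxy; apply/idP/idP => [cxz|cyz]; last exact: connect_trans cxy cyz.
apply: connect_trans _ cxz.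
by rewrite (sym_connect_sym (@erel_sym c)).
Qed.

Lemma PP_partition c : partition (PP c) [set: V].
Proof. exact: equivalence_partitionP (erel_eqv c). Qed.

Lemma PP_pblock c x y : (y \in pblock (PP c) x) = connect (erel c) x y.
Proof. by rewrite (pblock_equivalence_partition (erel_eqv c)) ?inE. Qed.

Lemma PP_cover c x : x \in cover (PP c).
Proof. by rewrite (cover_partition (PP_partition c)) inE. Qed.

Lemma erel_col c x y : connect (erel c) x y -> c x = c y.
Proof. by apply: connect_const => u w /andP [_ /eqP]. Qed.

Lemma alph_pblock c v : alph c (pblock (PP c) v) = c v.
Proof.
rewrite /alph ffunE pblock_mem ?PP_cover //.
case: pickP => [x|]; last by move/(_ v); rewrite mem_pblock PP_cover.
by rewrite PP_pblock => /erel_col ->.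
Qed.

Lemma PP_conn c b x y : b \in PP c -> x \in b -> y \in b ->
  connect (block_rel par b) x y.
Proof.
move=> bP xb yb.
have tiP : trivIset (PP c) by case/and3P: (PP_partition c).
have Eb := def_pblock tiP bP xb.
move: yb; rewrite -Eb PP_pblock => cxy.
apply: (connect_restrict (A := mem (pblock (PP c) x))) cxy; first by rewrite mem_pblock PP_cover.
move=> u w; rewrite inE PP_pblock => cxu /[dup] euw /andP [Hed _].
have cxw : connect (erel c) x w := connect_trans cxu (connect1 euw).
rewrite inE PP_pblock cxw /block_rel /= !PP_pblock cxu cxw /=.
exact: Hed.
Qed.

Lemma partition_block (P : {set {set V}}) b : partition P [set: V] -> b \in P ->
  exists v, b = pblock P v.
Proof.
case/and3P=> _ tiP n0 bP.
have /set0Pn [v vb] : b != set0 by apply: contraNneq n0 => <-.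
by exists v; rewrite (def_pblock tiP bP vb).
Qed.

Definition Phi (a : {ffun V -> nat} * seq nat * seq nat) :=
  let: (sigma, tau, rho) := a in
  (PP (fun v => lfun tau (sigma v)), alph (fun v => lfun tau (sigma v)),
   [ffun v => lfun rho (sigma v)]).

Lemma Phi_inB a : inA par a -> inB par (Phi a).
Proof.
case: a => [[sigma tau] rho] [s [r [Hrs [Hs1 Hs2] Hsinc [Hts [Ht1 Ht2] Htmon] [Hrhos [t [Hts' [Hr1 Hr2]]] Hqsh]]]].
set c := fun v => lfun tau (sigma v).
have tiP : trivIset (PP c) by case/and3P: (PP_partition c).
have sig1 v : in1s s (sigma v) by exact: Hs1.
have edge_le y x : par x == Some y -> c y <= c x.
  move=> e; have := Hsinc y x (edge_strict (e := fedge par) e).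
  have := sig1 y; have := sig1 x; rewrite /in1s => /andP [? ?] /andP [? ?] lt.
  apply: Htmon => //; exact: ltnW.
split.
- split; first exact: PP_partition.
  by move=> b bP x y xb yb; apply: PP_conn bP xb yb.
- by move=> b bP; rewrite /alph ffunE (negbTE bP).
- split.
  + exists r; split; first by case/andP: Hrs.
    split.
    * move=> b bP; have [v ->] := partition_block (PP_partition c) bP.
      by rewrite alph_pblock; apply: Ht1.
    * move=> j /Ht2 [i [Hi Hij]]; have [v [_ Hv]] := Hs2 i Hi.
      exists (pblock (PP c) v); split; first by rewrite pblock_mem ?PP_cover.
      by rewrite alph_pblock /c Hv.
  + apply: strict_mono => b b' /and4P [bP b'P nbb' /existsP [x /andP [xb' /existsP [y /andP [yb pxy]]]]].
    rewrite -(def_pblock tiP bP yb) -(def_pblock tiP b'P xb') !alph_pblock.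
    rewrite ltn_neqAle edge_le // andbT.
    apply: contra nbb' => /eqP ecyx.
    have eyx : erel c y x by apply/andP; split; [rewrite pxy | exact/eqP].
    rewrite -(def_pblock tiP bP yb) -(def_pblock tiP b'P xb').
    by apply/eqP/esym/same_pblock => //; rewrite PP_pblock connect1.
- have t1 : 1 <= t.
    have s1 : in1s s 1 by rewrite /in1s; case/andP: Hrs => ? ?; lia.
    by have := Hr1 1 s1; rewrite /in1s => /andP [? ?]; lia.
  exists t; split => //; split.
  + by move=> v _; rewrite ffunE; apply: Hr1.
  + move=> j /Hr2 [i [Hi Hij]]; have [v [_ Hv]] := Hs2 i Hi.
    by exists v; rewrite ffunE Hv.
- apply: strict_mono => u v /andP [puv ebl].
  rewrite !ffunE.
  have Huv := Hsinc u v (edge_strict (e := fedge par) puv).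
  have := sig1 u; have := sig1 v; rewrite /in1s => /andP [? ?] /andP [? ?].
  apply: Hqsh => //.
  have : v \in pblock (PP c) u by rewrite (eqP ebl) mem_pblock PP_cover.
  by rewrite PP_pblock => /erel_col.
Qed.
End Main.


Lemma word1 (V : finType) (par : V -> option V) (d : V -> Om) (c : V -> nat) :
  word op predT (fun v => Some (d v)) c
  = word op (mem (PP par c)) (block_dec op d) (alph par c).
Proof.
have tiP : trivIset (PP par c) by case/and3P: (PP_partition par c).
rewrite /word.
have -> : \max_(x | predT x) c x = \max_(b | b \in PP par c) alph par c b.
  apply/anti_leq/andP; split.
  - apply/bigmax_leqP => v _; rewrite -(alph_pblock par c v).
    by apply: leq_bigmax_cond; rewrite pblock_mem ?PP_cover.
  - apply/bigmax_leqP => b bP; have [v ->] := partition_block (PP_partition par c) bP.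
    by rewrite alph_pblock; apply: leq_bigmax_cond.
apply: eq_map => j.
rewrite !osum_big !big_filter big_enum_cond.
set Pj := [set b in PP par c | alph par c b == j].
have tiPj : trivIset Pj by apply: trivIsetS tiP; apply/subsetP => b; rewrite inE => /andP [].
have Hcov x : (x \in cover Pj) = (c x == j).
  apply/bigcupP/idP => [[b] | Hx].
  - rewrite inE => /andP [bP Hb] xb.
    by rewrite -(def_pblock tiP bP xb) alph_pblock in Hb.
  - exists (pblock (PP par c) x); last by rewrite mem_pblock PP_cover.
    by rewrite inE pblock_mem ?PP_cover // alph_pblock.
rewrite (eq_bigl (fun x => x \in cover Pj)); last by move=> x; rewrite Hcov.
rewrite big_trivIset //.
rewrite big_enum_cond; apply: eq_big => [b|b _]; first by rewrite inE.
by rewrite /block_dec osum_big big_enum.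
Qed.


Lemma same_order (V : finType) (f g : V -> nat) s s' :
  surj_onto (fun _ => True) f s -> surj_onto (fun _ => True) g s' ->
  (forall u v, (f u < f v) = (g u < g v)) -> forall v, f v = g v.
Proof.
move=> [Hf1 Hf2] [Hg1 Hg2] Hord.
suff H : forall n v, f v <= n -> g v = f v by move=> v; rewrite (H (f v)).
elim=> [|n IH] v Hv.
  by have := Hf1 v I; lia.
have Hfv := Hf1 v I; have Hgv := Hg1 v I.
apply/eqP; rewrite eqn_leq; apply/andP; split.
- rewrite leqNgt; apply/negP => lt.
  have [w [_ Hw]] := Hg2 (f v) ltac:(lia).
  have : f w < f v by rewrite Hord Hw.
  move=> fwv; have := IH w ltac:(lia); lia.
- case E: (f v) => [|m]; first lia.
  case: m E => [|m] E; first by lia.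
  have [w [_ Hw]] := Hf2 m.+1 ltac:(lia).
  have : f w < f v by rewrite Hw E.
  rewrite Hord => gwv; have := IH w ltac:(lia); lia.
Qed.

Section Key.
Variables (V : finType) (par : V -> option V).
Definition lexlt (p q : nat * nat) := (p.1 < q.1) || ((p.1 == q.1) && (p.2 < q.2)).

Lemma key_lt (sigma : {ffun V -> nat}) tau rho : inA par (sigma, tau, rho) ->
  forall u v, (sigma u < sigma v) =
    lexlt (lfun tau (sigma u), lfun rho (sigma u)) (lfun tau (sigma v), lfun rho (sigma v)).
Proof.
move=> [s [r [Hrs [Hs1 Hs2] Hsinc [Hts [Ht1 Ht2] Htmon] [Hrhos [t [Hts' [Hr1 Hr2]]] Hqsh]]]].
have H u v : sigma u < sigma v ->
   lexlt (lfun tau (sigma u), lfun rho (sigma u)) (lfun tau (sigma v), lfun rho (sigma v)).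
  move=> lt; have := Hs1 u I; have := Hs1 v I => /andP [? ?] /andP [? ?].
  have le := Htmon (sigma u) (sigma v) ltac:(lia) ltac:(lia) ltac:(lia).
  rewrite /lexlt /=; case: (ltngtP (lfun tau (sigma u)) (lfun tau (sigma v))) => //= E.
  - lia.
  - by apply: Hqsh.
move=> u v; case: (ltngtP (sigma u) (sigma v)) => E.
- by rewrite H.
- have := H v u E; rewrite /lexlt /= => /orP [h|/andP [/eqP h1 h2]];
  apply/esym/negbTE/negP => /orP [h'|/andP [/eqP h1' h2']]; lia.
- by rewrite E /lexlt /= !ltnn eqxx.
Qed.

Lemma Phi_inj a a' : inA par a -> inA par a' -> Phi par a = Phi par a' -> a = a'.
Proof.
case: a => [[sigma tau] rho]; case: a' => [[sigma' tau'] rho'] HA HA' /=.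
set c := fun v => lfun tau (sigma v); set c' := fun v => lfun tau' (sigma' v).
case=> EP Ea Eb.
have Ec v : c v = c' v.
  by rewrite -(alph_pblock par c v) -(alph_pblock par c' v) Ea EP.
have Er v : lfun rho (sigma v) = lfun rho' (sigma' v).
  by have := congr1 (fun f : {ffun V -> nat} => f v) Eb; rewrite /= !ffunE.
have Kl := key_lt HA; have Kl' := key_lt HA'.
case: (HA) => s [r [Hrs Hs Hsinc [Hts Ht Htmon] [Hrhos _ _]]].
case: (HA') => s' [r' [Hrs' Hs' Hsinc' [Hts' Ht' Htmon'] [Hrhos' _ _]]].
have Es v : sigma v = sigma' v.
  apply: (same_order Hs Hs') => u w.
  rewrite Kl Kl' /lexlt /= !Er; have := Ec u; have := Ec w; rewrite /c /c' => -> -> //.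
have Ess : s = s'.
  case: Hs => Hs1 Hs2; case: Hs' => Hs1' Hs2'.
  have [v [_ Hv]] := Hs2 s ltac:(lia); have [v' [_ Hv']] := Hs2' s' ltac:(lia).
  have := Hs1' v I; have := Hs1 v' I; rewrite Es in Hv; rewrite -Es in Hv'; lia.
have Esig : sigma = sigma' by apply/ffunP => v; exact: Es.
subst sigma' s'.
have Hnth (l l' : seq nat) : size l = s -> size l' = s ->
    (forall v, lfun l (sigma v) = lfun l' (sigma v)) -> l = l'.
  move=> sl sl' Hl; apply: (eq_from_nth (x0 := 0)); first by rewrite sl sl'.
  move=> i; rewrite sl => lti.
  case: Hs => _ Hs2; have [v [_ Hv]] := Hs2 i.+1 ltac:(lia).
  by have := Hl v; rewrite Hv.
have -> : tau = tau' by apply: Hnth => // v; exact: Ec v.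
have Hr' : size rho' = s by rewrite Hrhos' -Ess.
by have -> : rho = rho' by apply: Hnth => // v; exact: Er v.
Qed.



Lemma connect_constT (T:finType) (U : Type) (e : rel T) (c : T -> U) :
  (forall x y, e x y -> c x = c y) -> forall x y, connect e x y -> c x = c y.
Proof.
move=> He x y /connectP [p Hp ->] {y}.
elim: p x Hp => //= z p IH x /andP [exz Hp].
by rewrite (He _ _ exz) (IH _ Hp).
Qed.

Lemma Phi_surj b : inB par b -> exists2 a, inA par a & Phi par a = b.
Proof.
case: b => [[P alpha] beta] [[Hpart Hconn] Hout [[r [r1 [Ha1 Ha2]]] Hamon] [t [t1 [Hb1 Hb2]]] Hbmon].
have tiP : trivIset P by case/and3P: Hpart.
have covP x : x \in cover P by rewrite (cover_partition Hpart) inE.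
set a := fun v => alpha (pblock P v).
set M := (\max_v beta v).+1.
have bM v : beta v < M by rewrite ltnS (leq_bigmax (F := beta)).
have M0 : 0 < M by [].
set key := fun v => a v * M + beta v.
have keydiv v : key v %/ M = a v by rewrite /key /= divnMDl // divn_small ?addn0.
have keymod v : key v %% M = beta v by rewrite /key /= modnMDl modn_small.
have Qe x y : par y == Some x -> pblock P x != pblock P y -> a x < a y.
  move=> pxy ne; apply: Hamon; apply: edge_strict.
  rewrite /Qedge !pblock_mem // ne /=.
  apply/existsP; exists y; rewrite mem_pblock covP /=.
  by apply/existsP; exists x; rewrite mem_pblock covP.
have Ge x y : par y == Some x -> pblock P x == pblock P y -> beta x < beta y.
  by move=> pxy e; apply: Hbmon; apply: edge_strict; rewrite /Gedge /= pxy.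
set S := rkS key.
set sigma := [ffun v => rk key v].
set tau := [seq k %/ M | k <- S].
set rho := [seq k %% M | k <- S].
have sig v : sigma v = rk key v by rewrite ffunE.
have Hsize v : (rk key v).-1 < size S by have := rk_range key v; rewrite -/S; lia.
have Htau v : lfun tau (sigma v) = a v.
  by rewrite /lfun sig (nth_map 0) // nth_rk keydiv.
have Hrho v : lfun rho (sigma v) = beta v.
  by rewrite /lfun sig (nth_map 0) // nth_rk keymod.
have Hsrange v : 1 <= sigma v <= size S by rewrite sig; exact: rk_range.
have Hssurj i : 1 <= i <= size S -> exists v, sigma v = i.
  by move=> /(rk_surj (f := key)) [v Hv]; exists v; rewrite sig.
have Hblock bb : bb \in P -> exists v, bb = pblock P v by exact: partition_block.
have HtauS : surj_onto (in1s (size S)) (lfun tau) r.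
  split.
  - move=> i /Hssurj [v <-]; rewrite Htau; apply: Ha1; exact: pblock_mem.
  - move=> j /Ha2 [bb [bP Hbb]]; have [v Ev] := Hblock bb bP.
    by exists (sigma v); split; [exact: Hsrange | rewrite Htau /a -Ev].
have HrhoS : surj_onto (in1s (size S)) (lfun rho) t.
  split.
  - by move=> i /Hssurj [v <-]; rewrite Hrho; apply: Hb1.
  - move=> j /Hb2 [v [_ Hv]].
    by exists (sigma v); split; [exact: Hsrange | rewrite Hrho].
have nthS i j : 1 <= i -> i < j -> j <= size S ->
    nth 0 S i.-1 < nth 0 S j.-1.
  by move=> *; apply: rk_nth_lt; rewrite -/S; lia.
exists (sigma, tau, rho).
- exists (size S), r; split.
  + by rewrite r1 (surj_le HtauS).
  + split; first by move=> v _; exact: Hsrange.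
    by move=> j /Hssurj [v Hv]; exists v.
  + apply: strict_mono => x y pxy.
    rewrite !sig rk_lt /key.
    case E: (pblock P x == pblock P y).
    * have := Ge x y pxy E; rewrite /a (eqP E); lia.
    * have := Qe x y pxy (negbT E); have := bM x; nia.
  + split; [by rewrite size_map | exact: HtauS |].
    move=> i j i1 ij js; rewrite /lfun !(nth_map 0); try lia.
    apply: leq_div2r.
    case: (ltngtP i j) ij => // [ltij _ | -> _]; last by [].
    exact/ltnW/nthS.
  + split; [by rewrite size_map | by exists t; split; [exact: surj_le HrhoS | exact: HrhoS] |].
    move=> i j i1 ij js; rewrite /lfun !(nth_map 0); try lia.
    have := nthS i j i1 ij js.
    move: (nth 0 S i.-1) (nth 0 S j.-1) => k1 k2 lt12 eqd.
    rewrite (divn_eq k1 M) (divn_eq k2 M) eqd in lt12; lia.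
-
  rewrite /Phi.
  set c := fun v => lfun tau (sigma v).
  have Hc v : c v = a v by exact: Htau.
  have Hrel x y : connect (erel par c) x y = (y \in pblock P x).
    apply/idP/idP => [cxy | yx].
    + have := connect_constT (c := pblock P) _ cxy.
      rewrite -eq_pblock // => -> //.
      move=> u w /andP [ed /eqP ec]; apply/eqP; apply: contraT => ne.
      rewrite /c !Htau in ec.
      case/orP: ed => ed.
      * by have := Qe u w ed ne; lia.
      * by have := Qe w u ed; rewrite eq_sym => /(_ ne); lia.
    + have bP : pblock P x \in P by exact: pblock_mem.
      have := Hconn _ bP x y; rewrite mem_pblock covP => /(_ isT yx).
      apply: connect_sub => u w /andP [ub /andP [wb ed]].
      apply: connect1; apply/andP; split => //; apply/eqP.
      by rewrite !Hc /a (def_pblock tiP bP ub) (def_pblock tiP bP wb).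
  have EP : PP par c = P.
    rewrite -[RHS](equivalence_partition_pblock Hpart) /PP /equivalence_partition.
    apply: eq_imset => x; apply/setP => y; by rewrite !inE Hrel.
  congr (_, _, _) => //.
  + apply/ffunP => bb; rewrite /alph ffunE EP.
    case: ifP => bP; last by rewrite Hout // bP.
    case: pickP => [x xb|]; last first.
      have [v ->] := Hblock bb bP; by move/(_ v); rewrite mem_pblock covP.
    by rewrite Hc /a (def_pblock tiP bP xb).
  + by apply/ffunP => v; rewrite ffunE Hrho.
Qed.
End Key.
End Mon.

Lemma word_ext (Om : Type) (op : Om -> Om -> Om) (T : finType) (D : pred T)
    (d : T -> option Om) (f g : T -> nat) : f =1 g -> word op D d f = word op D d g.
Proof.
move=> E; rewrite /word (eq_bigr _ (fun x _ => E x)).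
apply: eq_map => j; congr osum; congr map; apply: eq_filter => x; by rewrite E.
Qed.

Theorem lemma5p2 (Om : Type) (op : Om -> Om -> Om)
    (op_assoc : associative op) (op_comm : commutative op)
    (V : finType) (par : V -> option V) (d : V -> Om)
    (hforest : is_forest par) (hne : 0 < #|V|) :
  exists Phi : {ffun V -> nat} * seq nat * seq nat ->
               {set {set V}} * {ffun {set V} -> nat} * {ffun V -> nat},
  [/\ (forall a, inA par a -> inB par (Phi a)),
      (forall a a', inA par a -> inA par a' -> Phi a = Phi a' -> a = a'),
      (forall b, inB par b -> exists2 a, inA par a & Phi a = b) &
      (forall sigma tau rho P alpha beta,
         inA par (sigma, tau, rho) -> Phi (sigma, tau, rho) = (P, alpha, beta) ->
         word op predT (fun v => Some (d v)) (fun v => lfun tau (sigma v))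
           = word op (mem P) (block_dec op d) alpha /\
         word op predT (fun v => Some (d v)) (fun v => lfun rho (sigma v))
           = word op predT (fun v => Some (d v)) beta)].
Proof.
exists (Phi par); split.
- exact: Phi_inB.
- exact: Phi_inj.
- exact: Phi_surj.
- move=> sigma tau rho P alpha beta HA /= [<- <- <-]; split.
  + exact: word1.
  + by apply: word_ext => v; rewrite ffunE.
Qed.
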